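(* Assume (A1)–(A4). Run the Algorithm with $x_1\in R\mathbb{B}$, $\eta=\frac{2R}{G_f\sqrt{T}}$ and $\rho=0$. Then $\mathrm{Reg}_T\le2RG_f\sqrt{T}$, and for all $t\in[T]$, $$g(x_t)\le2RG_g\exp\Big(-\frac{\sigma^2(t-1)}{2G_g^2}\Big)+\frac{2RG_g}{\xi\sqrt{T}}.$$
   Context: Let $d,T$ be positive integers and $[T]=\{1,\dots,T\}$. Write $\|\cdot\|$ for the Euclidean norm and $\mathbb{B}=\{x\in\mathbb{R}^d:\|x\|\le1\}$. For a closed convex set $\mathcal{Y}$, $\Pi_{\mathcal{Y}}$ is the Euclidean projection onto $\mathcal{Y}$. For $a\in\mathbb{R}$, $[a]_+=\max(a,0)$. Let $g:\mathbb{R}^d\to\mathbb{R}$ be convex with subdifferential $\partial g(x)$, and set $\mathcal{X}=\{x:g(x)\le0\}$. Assumptions: (A1) there is $R>0$ with $\mathcal{X}\subseteq R\mathbb{B}$; (A2) $f_1,\dots,f_T:\mathbb{R}^d\to\mathbb{R}$ are convex and differentiable, and there is $G_f>0$ with $\|\nabla f_t(x)\|\le G_f$ for all $x\in R\mathbb{B}$ and all $t\in[T]$; (A3) there is $G_g>0$ with $\|s\|\le G_g$ for all $s\in\partial g(x)$ and all $x\in R\mathbb{B}$; (A4) there are $\sigma,\epsilon>0$ such that $\mathcal{X}'=\{x:g(x)=-\epsilon\}$ is nonempty and $\|s\|\ge\sigma$ for all $s\in\partial g(x)$ and all $x\in\mathcal{X}'$. Algorithm (OGD with Polyak feasibility steps).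 Inputs are $x_1\in\mathbb{R}^d$, $\eta>0$ and $\rho\ge0$. For $t=1,\dots,T$: - play $x_t$ and then receive $f_t$; the functions may be chosen adversarially and may depend on past actions; - query $g_t=g(x_t)$ and some $s_t\in\partial g(x_t)$; - set $y_t=x_t-\eta\nabla f_t(x_t)$; - if $s_t\ne0$, set $x_{t+1}=\Pi_{R\mathbb{B}}\big(y_t-\frac{[g_t+s_t^\top(y_t-x_t)+\rho]_+}{\|s_t\|^2}s_t\big)$; if $s_t=0$, set $x_{t+1}=\Pi_{R\mathbb{B}}(y_t)$. Regret is $\mathrm{Reg}_T=\sum_{t=1}^Tf_t(x_t)-\min_{x\in\mathcal{X}}\sum_{t=1}^Tf_t(x)$. Also $\gamma=1-\sigma^2/G_g^2$ and $\xi=1-\sqrt{\gamma}$. *)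

(* Defs.v *)
From HB Require Import structures.
From mathcomp Require Import all_boot all_order all_algebra.
From mathcomp Require Import all_classical all_reals all_analysis.
Set Implicit Arguments. Unset Strict Implicit. Unset Printing Implicit Defensive.
Import Order.TTheory GRing.Theory Num.Theory.
Import numFieldNormedType.Exports.
Local Open Scope ring_scope.

Section Defs.
Variables (R : realType) (d : nat).
Local Notation vec := 'rV[R]_d.

Definition dotv (u v : vec) : R := (u *m v^T) 0 0.
Definition enorm (u : vec) : R := Num.sqrt (dotv u u).

Definition convex_fun (h : vec -> R) : Prop :=
  forall (x y : vec) (l : R), 0 <= l <= 1 ->
    h (l *: x + (1 - l) *: y) <= l * h x + (1 - l) * h y.

Definition subgrad (h : vec -> R) (x s : vec) : Prop :=
  forall y : vec, h x + dotv s (y - x) <= h y.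

Definition is_gradient (h : vec -> R) (x gr : vec) : Prop :=
  differentiable h x /\ forall v : vec, 'D_v h x = dotv gr v.

Definition in_ball (Rad : R) (x : vec) : Prop := enorm x <= Rad.

Definition is_proj (C : vec -> Prop) (y p : vec) : Prop :=
  C p /\ forall q : vec, C q -> enorm (y - p) <= enorm (y - q).

Definition pos_part (a : R) : R := Num.max a 0.

(* The point before projection in one round of the algorithm:
   y = x - eta * grad, then the Polyak feasibility step with parameter rho. *)
Definition pre_proj (g : vec -> R) (eta rho : R) (x gradf s : vec) : vec :=
  let y := x - eta *: gradf in
  if s != 0 then
    y - (pos_part (g x + dotv s (y - x) + rho) / (enorm s ^+ 2)) *: s
  else y.

End Defs.

(* Main.v *)
Require Import Defs.
From HB Require Import structures.
From mathcomp Require Import all_boot all_order all_algebra.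
From mathcomp Require Import all_classical all_reals all_analysis.
From mathcomp Require Import ring lra.
Import Order.TTheory GRing.Theory Num.Theory.
Import numFieldNormedType.Exports.
Set Implicit Arguments. Unset Strict Implicit.
Local Open Scope ring_scope.
Local Open Scope classical_set_scope.

Lemma dotvE (R : realType) d (u v : 'rV[R]_d) : dotv u v = \sum_i u 0 i * v 0 i.
Proof. by rewrite /dotv !mxE; apply: eq_bigr => i _; rewrite !mxE. Qed.

Lemma dotvC (R : realType) d (u v : 'rV[R]_d) : dotv u v = dotv v u.
Proof. by rewrite !dotvE; apply: eq_bigr => i _; rewrite mulrC. Qed.

Lemma dotvDl (R : realType) d (u w v : 'rV[R]_d) : dotv (u + w) v = dotv u v + dotv w v.
Proof. by rewrite !dotvE -big_split; apply: eq_bigr => i _; rewrite !mxE mulrDl. Qed.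

Lemma dotvZl (R : realType) d a (u v : 'rV[R]_d) : dotv (a *: u) v = a * dotv u v.
Proof. by rewrite !dotvE mulr_sumr; apply: eq_bigr => i _; rewrite !mxE mulrA. Qed.

Lemma dotvNl (R : realType) d (u v : 'rV[R]_d) : dotv (- u) v = - dotv u v.
Proof. by rewrite -scaleN1r dotvZl mulN1r. Qed.

Lemma dotvBl (R : realType) d (u w v : 'rV[R]_d) : dotv (u - w) v = dotv u v - dotv w v.
Proof. by rewrite dotvDl dotvNl. Qed.

Lemma dotvDr (R : realType) d (u w v : 'rV[R]_d) : dotv v (u + w) = dotv v u + dotv v w.
Proof. by rewrite !(dotvC v) dotvDl. Qed.
Lemma dotvZr (R : realType) d a (u v : 'rV[R]_d) : dotv v (a *: u) = a * dotv v u.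
Proof. by rewrite !(dotvC v) dotvZl. Qed.
Lemma dotvNr (R : realType) d (u v : 'rV[R]_d) : dotv v (- u) = - dotv v u.
Proof. by rewrite !(dotvC v) dotvNl. Qed.
Lemma dotvBr (R : realType) d (u w v : 'rV[R]_d) : dotv v (u - w) = dotv v u - dotv v w.
Proof. by rewrite !(dotvC v) dotvBl. Qed.
Lemma dotv0l (R : realType) d (v : 'rV[R]_d) : dotv 0 v = 0.
Proof. by rewrite dotvE big1 // => i _; rewrite mxE mul0r. Qed.
Lemma dotv0r (R : realType) d (v : 'rV[R]_d) : dotv v 0 = 0.
Proof. by rewrite dotvC dotv0l. Qed.

Lemma dotvv_ge0 (R : realType) d (v : 'rV[R]_d) : 0 <= dotv v v.
Proof. by rewrite dotvE sumr_ge0 // => i _; rewrite -expr2 sqr_ge0. Qed.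

Lemma dotvv_eq0 (R : realType) d (v : 'rV[R]_d) : dotv v v = 0 -> v = 0.
Proof.
rewrite dotvE => /eqP; rewrite psumr_eq0; last by move=> i _; rewrite -expr2 sqr_ge0.
move=> /allP H; apply/rowP => i; rewrite mxE.
have := H i (mem_index_enum _); rewrite mulf_eq0 orbb => /eqP //.
Qed.

Lemma enorm_ge0 (R : realType) d (v : 'rV[R]_d) : 0 <= enorm v.
Proof. exact: sqrtr_ge0. Qed.

Lemma enorm_sq (R : realType) d (v : 'rV[R]_d) : enorm v ^+ 2 = dotv v v.
Proof. by rewrite sqr_sqrtr // dotvv_ge0. Qed.

Lemma enorm0 (R : realType) d : enorm (0 : 'rV[R]_d) = 0.
Proof. by rewrite /enorm dotv0l sqrtr0. Qed.

Lemma enorm_eq0 (R : realType) d (v : 'rV[R]_d) : enorm v = 0 -> v = 0.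
Proof. by move=> H; apply: dotvv_eq0; rewrite -enorm_sq H expr0n. Qed.

Lemma enormN (R : realType) d (v : 'rV[R]_d) : enorm (- v) = enorm v.
Proof. by rewrite /enorm dotvNl dotvNr opprK. Qed.

Lemma enormB (R : realType) d (u v : 'rV[R]_d) : enorm (u - v) = enorm (v - u).
Proof. by rewrite -enormN opprB. Qed.

Lemma enormZ (R : realType) d a (v : 'rV[R]_d) : enorm (a *: v) = `|a| * enorm v.
Proof. by rewrite /enorm dotvZl dotvZr mulrA -expr2 sqrtrM ?sqr_ge0 // sqrtr_sqr. Qed.

Lemma CS (R : realType) d (u v : 'rV[R]_d) : dotv u v <= enorm u * enorm v.
Proof.
have [u0|] := eqVneq (enorm u) 0.
  by rewrite (enorm_eq0 u0) dotv0l enorm0 mul0r.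
have [v0|] := eqVneq (enorm v) 0.
  by rewrite (enorm_eq0 v0) dotv0r enorm0 mulr0.
move=> vn0 un0.
have up : 0 < enorm u by rewrite lt_def un0 enorm_ge0.
have vp : 0 < enorm v by rewrite lt_def vn0 enorm_ge0.
set a := enorm u; set b := enorm v.
have := dotvv_ge0 (b *: u - a *: v).
rewrite dotvBl !dotvBr !dotvZl !dotvZr -!enorm_sq (dotvC v u) -/a -/b.
move=> H.
have : 0 <= a * b * (2 * (a * b - dotv u v)) by nra.
rewrite pmulr_rge0; last by rewrite mulr_gt0.
nra.
Qed.

Lemma enormD (R : realType) d (u v : 'rV[R]_d) : enorm (u + v) <= enorm u + enorm v.
Proof.
rewrite -(@ler_pXn2r _ 2) ?nnegrE ?addr_ge0 ?enorm_ge0 //.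
rewrite enorm_sq dotvDl !dotvDr -!enorm_sq (dotvC v u).
have := CS u v; nra.
Qed.

Lemma enormB2 (R : realType) d (a b : 'rV[R]_d) :
  enorm (a - b) ^+ 2 = enorm a ^+ 2 - 2 * dotv a b + enorm b ^+ 2.
Proof. rewrite !enorm_sq dotvBl !dotvBr (dotvC b a); ring. Qed.

Lemma enormD2 (R : realType) d (a b : 'rV[R]_d) :
  enorm (a + b) ^+ 2 = enorm a ^+ 2 + 2 * dotv a b + enorm b ^+ 2.
Proof. rewrite !enorm_sq dotvDl !dotvDr (dotvC b a); ring. Qed.

Lemma enorm_le_sq (R : realType) d (a b : 'rV[R]_d) :
  enorm a ^+ 2 <= enorm b ^+ 2 -> enorm a <= enorm b.
Proof. by rewrite ler_pXn2r // nnegrE enorm_ge0. Qed.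

Lemma small_le0 (R : realType) (a b : R) : 0 <= b ->
  (forall l, 0 < l <= 1 -> a <= l * b) -> a <= 0.
Proof.
move=> b0 H; rewrite leNgt; apply/negP => a0.
have l0 : 0 < a / (b + a) by rewrite divr_gt0 // ltr_wpDl.
have l1 : a / (b + a) <= 1 by rewrite ler_pdivrMr ?ltr_wpDl // mul1r lerDr.
have := H (a / (b + a)); rewrite l0 l1 => /(_ isT).
rewrite mulrAC ler_pdivlMr ?ltr_wpDl //; nra.
Qed.

Lemma in_ball_conv (R : realType) d Rad (u p : 'rV[R]_d) l :
  in_ball Rad u -> in_ball Rad p -> 0 <= l <= 1 -> in_ball Rad (l *: u + (1 - l) *: p).
Proof.
rewrite /in_ball => Hu Hp /andP[l0 l1].
apply: le_trans (enormD _ _) _; rewrite !enormZ !ger0_norm ?subr_ge0 //.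
have := enorm_ge0 u; have := enorm_ge0 p; nra.
Qed.

Lemma ball_proj_nonexp (R : realType) d Rad (y p u : 'rV[R]_d) :
  is_proj (in_ball Rad) y p -> in_ball Rad u -> enorm (p - u) <= enorm (y - u).
Proof.
move=> [Hp Hmin] Hu.
have key : dotv (y - p) (u - p) <= 0.
  apply: (small_le0 (b := enorm (u - p) ^+ 2 / 2)).
    by rewrite divr_ge0 // sqr_ge0.
  move=> l /andP[l0 l1].
  have Hin : in_ball Rad (l *: u + (1 - l) *: p).
    by apply: in_ball_conv => //; rewrite (ltW l0) l1.
  have H := Hmin _ Hin.
  have : enorm (y - p) ^+ 2 <= enorm (y - (l *: u + (1 - l) *: p)) ^+ 2.
    by rewrite ler_pXn2r ?nnegrE ?enorm_ge0.
  have -> : y - (l *: u + (1 - l) *: p) = (y - p) - l *: (u - p).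
    by rewrite scalerBl scale1r scalerBr; rewrite !opprD !addrA; congr (_ + _);
       rewrite addrAC -!addrA; congr (_ + _); rewrite addrC -addrA addNr addr0.
  rewrite [X in _ <= X]enormB2 enormZ dotvZr exprMn real_normK ?num_real //.
  move=> H2.
  have : 2 * l * dotv (y - p) (u - p) <= l ^+ 2 * enorm (u - p) ^+ 2 by lra.
  move=> H3; nra.
apply: enorm_le_sq.
have -> : y - u = (y - p) - (u - p) by rewrite opprB addrA subrK.
rewrite (enormB p u) [X in _ <= X]enormB2; have := enorm_ge0 (y - p); nra.
Qed.

Definition polyak (R : realType) d (a : R) (x s w : 'rV[R]_d) : 'rV[R]_d :=
  if s != 0 then w - (pos_part (a + dotv s (w - x) + 0) / enorm s ^+ 2) *: s else w.

Lemma pre_projE (R : realType) d (g : 'rV[R]_d -> R) eta x gr s :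
  pre_proj g eta 0 x gr s = polyak (g x) x s (x - eta *: gr).
Proof. by []. Qed.

Lemma pos_part_lip (R : realType) (a b : R) :
  (pos_part a - pos_part b) ^+ 2 <= (pos_part a - pos_part b) * (a - b).
Proof.
rewrite /pos_part.
case: (lerP 0 a) => ha; case: (lerP 0 b) => hb; nra.
Qed.

Lemma pos_part_ge0 (R : realType) (a : R) : 0 <= pos_part a.
Proof. by rewrite /pos_part le_max lexx orbT. Qed.

Lemma enorm_gt0 (R : realType) d (s : 'rV[R]_d) : s != 0 -> 0 < enorm s.
Proof.
move=> s0; rewrite lt_def enorm_ge0 andbT; apply/eqP => /enorm_eq0 H.
by rewrite H eqxx in s0.
Qed.

Lemma polyak_nonexp (R : realType) d (a : R) (x s w1 w2 : 'rV[R]_d) :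
  enorm (polyak a x s w1 - polyak a x s w2) <= enorm (w1 - w2).
Proof.
rewrite /polyak; case: ifP => s0 //.
set p1 := pos_part _; set p2 := pos_part _.
have sp := enorm_gt0 s0.
have -> : w1 - p1 / enorm s ^+ 2 *: s - (w2 - p2 / enorm s ^+ 2 *: s) =
          (w1 - w2) - ((p1 - p2) / enorm s ^+ 2) *: s.
  rewrite mulrBl scalerBl; rewrite !opprD !opprK !addrA; congr (_ + _).
  by rewrite addrAC -!addrA; congr (_ + _); rewrite addrC.
apply: enorm_le_sq; rewrite [X in X <= _]enormB2 dotvZr enormZ exprMn.
have hl := pos_part_lip (a + dotv s (w1 - x) + 0) (a + dotv s (w2 - x) + 0).
rewrite -/p1 -/p2 in hl.
have E : a + dotv s (w1 - x) + 0 - (a + dotv s (w2 - x) + 0) = dotv s (w1 - w2).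
  rewrite !addr0 !dotvBr; ring.
rewrite E dotvC in hl.
rewrite real_normK ?num_real //.
set k := enorm s ^+ 2.
have kp : 0 < k by rewrite exprn_gt0.
set D := dotv _ _.
have E1 : ((p1 - p2) / k) ^+ 2 * k = (p1 - p2) ^+ 2 / k.
  by rewrite expr_div_n expr2 invfM -!mulrA mulVf ?gt_eqF // mulr1.
have E2 : (p1 - p2) / k * D = ((p1 - p2) * D) / k by rewrite mulrAC.
rewrite E1 E2.
have h1 : (p1 - p2) ^+ 2 / k <= ((p1 - p2) * D) / k by rewrite ler_pM2r ?invr_gt0.
have h2 : 0 <= (p1 - p2) ^+ 2 / k by rewrite divr_ge0 ?sqr_ge0 ?ltW.
lra.
Qed.

Lemma polyak_fix (R : realType) d (a : R) (x s u : 'rV[R]_d) :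
  a + dotv s (u - x) <= 0 -> polyak a x s u = u.
Proof.
move=> h; rewrite /polyak; case: ifP => // _.
by rewrite /pos_part addr0 max_r // mul0r scale0r subr0.
Qed.

Lemma polyak_dec (R : realType) d (a : R) (x s u : 'rV[R]_d) :
  s != 0 -> 0 < a -> a + dotv s (u - x) <= 0 ->
  enorm (polyak a x s x - u) ^+ 2 <= enorm (x - u) ^+ 2 - a ^+ 2 / enorm s ^+ 2.
Proof.
move=> s0 a0 h; rewrite /polyak s0 subrr dotv0r !addr0 /pos_part (max_l (ltW a0)).
have -> : x - a / enorm s ^+ 2 *: s - u = (x - u) - a / enorm s ^+ 2 *: s.
  by rewrite addrAC.
rewrite [X in X <= _]enormB2 enormZ dotvZr exprMn real_normK ?num_real //.
have sp := enorm_gt0 s0.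
set k := enorm s ^+ 2.
have kp : 0 < k by rewrite exprn_gt0.
have hD : a <= dotv (x - u) s.
  by rewrite dotvC -opprB dotvNr; lra.
have E1 : (a / k) ^+ 2 * k = a ^+ 2 / k.
  by rewrite expr_div_n expr2 invfM -!mulrA mulVf ?gt_eqF // mulr1.
rewrite E1.
have : a ^+ 2 / k <= a / k * dotv (x - u) s.
  rewrite [X in X <= _](_ : _ = a / k * a); last by rewrite expr2 mulrAC.
  by apply: ler_wpM2l => //; rewrite divr_ge0 // ltW.
lra.
Qed.

Lemma one_step_compat (R : realType) d (h : 'rV[R]_d -> R) (V : 'rV[R]_d -> Prop)
  (L e : 'rV[R]_d) :
  convex_fun h ->
  (forall v w l, V v -> V w -> 0 <= l <= 1 -> V (l *: v + (1 - l) *: w)) ->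
  (forall v, V v -> dotv L v <= h v) ->
  forall v1 a v2 b, V v1 -> V v2 -> 0 < a -> 0 < b ->
    (dotv L v2 - h (v2 - b *: e)) / b <= (h (v1 + a *: e) - dotv L v1) / a.
Proof.
move=> hc Vc HL v1 a v2 b V1 V2 a0 b0.
set l := a / (a + b).
have ab0 : 0 < a + b by rewrite addr_gt0.
have l0 : 0 <= l by rewrite divr_ge0 ?ltW.
have l1 : l <= 1 by rewrite ler_pdivrMr // mul1r lerDl ltW.
have E1 : 1 - l = b / (a + b).
  by rewrite /l; field; rewrite lt0r_neq0.
have l01 : 0 <= l <= 1 by rewrite l0 l1.
have Vw := Vc v2 v1 l V2 V1 l01.
have Hw := HL _ Vw.
have Ew : l *: v2 + (1 - l) *: v1 = l *: (v2 - b *: e) + (1 - l) *: (v1 + a *: e).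
  have lb : l * b = (1 - l) * a by rewrite E1 /l; ring.
  by rewrite !scalerDr scalerN !scalerA lb addrACA addNr addr0.
have Hcv := hc (v2 - b *: e) (v1 + a *: e) l l01.
rewrite -Ew in Hcv.
rewrite dotvDr !dotvZr in Hw.
have key : l * (dotv L v2 - h (v2 - b *: e)) <= (1 - l) * (h (v1 + a *: e) - dotv L v1).
  move: (le_trans Hw Hcv); clear.
  move: (dotv L v2) (dotv L v1) (h (v2 - b *: e)) (h (v1 + a *: e)) l => P Q X Y k H.
  rewrite !mulrBr; lra.
have key2 : a * (dotv L v2 - h (v2 - b *: e)) <= b * (h (v1 + a *: e) - dotv L v1).
  have la : l * (a + b) = a by rewrite /l divfK // lt0r_neq0.
  have lb : (1 - l) * (a + b) = b by rewrite E1 divfK // lt0r_neq0.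
  move: key; move: (dotv L v2 - h (v2 - b *: e)) (h (v1 + a *: e) - dotv L v1) => X Y key.
  have -> : a * X = (a + b) * (l * X) by rewrite mulrA (mulrC _ l) la.
  have -> : b * Y = (a + b) * ((1 - l) * Y) by rewrite mulrA (mulrC _ (1 - l)) lb.
  by rewrite ler_wpM2l // ltW.
rewrite ler_pdivrMr // mulrAC ler_pdivlMr //.
move: key2; set X := (_ - _); set Y := (_ - _) => key2.
by rewrite mulrC (mulrC Y).
Qed.

Lemma one_step (R : realType) d (h : 'rV[R]_d -> R) (V : 'rV[R]_d -> Prop)
  (L e : 'rV[R]_d) (c0 : R) :
  convex_fun h -> V 0 ->
  (forall v w l, V v -> V w -> 0 <= l <= 1 -> V (l *: v + (1 - l) *: w)) ->
  (forall v, V v -> dotv L v <= h v) ->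
  (forall v a, V v -> 0 < a -> c0 * a <= h (v + a *: e) - dotv L v) ->
  exists c, c0 <= c /\ forall v a, V v -> dotv L v + c * a <= h (v + a *: e).
Proof.
move=> hc V0 Vc HL Hc0.
have cmp := @one_step_compat _ _ h V L e hc Vc HL.
pose Lo := [set x : R | exists v b, V v /\ 0 < b /\ x = (dotv L v - h (v - b *: e)) / b].
have Lo0 : Lo !=set0.
  by exists ((dotv L 0 - h (0 - 1 *: e)) / 1); exists 0, 1; split.
have Loub : forall v a, V v -> 0 < a -> ubound Lo ((h (v + a *: e) - dotv L v) / a).
  move=> v a Vv a0 x [v2 [b [V2 [b0 ->]]]].
  exact: cmp.
have hLo : has_ubound Lo.
  by exists ((h (0 + 1 *: e) - dotv L 0) / 1); apply: Loub.
exists (Num.max (sup Lo) c0); split; first by rewrite le_max lexx orbT.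
move=> v a Vv.
case: (ltrgtP a 0) => ha.
-
  have inLo : Lo ((dotv L v - h (v - (- a) *: e)) / (- a)).
    by exists v, (- a); split => //; split => //; rewrite oppr_gt0.
  have := ub_le_sup hLo inLo.
  rewrite scaleNr opprK => H1.
  have H2 : (dotv L v - h (v + a *: e)) / - a <= Num.max (sup Lo) c0.
    by apply: le_trans H1 _; rewrite le_max lexx.
  rewrite ler_pdivrMr ?oppr_gt0 // in H2.
  lra.
-
  have H1 : sup Lo <= (h (v + a *: e) - dotv L v) / a by apply: ge_sup => //; apply: Loub.
  have H2 : c0 <= (h (v + a *: e) - dotv L v) / a.
    by rewrite ler_pdivlMr //; apply: Hc0.
  have : Num.max (sup Lo) c0 <= (h (v + a *: e) - dotv L v) / a by rewrite ge_max H1 H2.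
  rewrite ler_pdivlMr // => H3.
  lra.
- by rewrite ha scale0r addr0 mulr0 addr0; apply: HL.
Qed.

Lemma dotv_delta (R : realType) d (u : 'rV[R]_d) (j : 'I_d) :
  dotv u (delta_mx 0 j) = u 0 j.
Proof.
rewrite dotvE (bigD1 j) //= big1 ?addr0.
  by rewrite mxE !eqxx mulr1.
by move=> i /negbTE ij; rewrite mxE ij andbF mulr0.
Qed.

Lemma convex_shift (R : realType) d (g : 'rV[R]_d -> R) q :
  convex_fun g -> convex_fun (fun v => g (q + v) - g q).
Proof.
move=> gc x y l l01.
have -> : q + (l *: x + (1 - l) *: y) = l *: (q + x) + (1 - l) *: (q + y).
  by rewrite !scalerDr addrACA -scalerDl (addrC l) subrK scale1r.
have := gc (q + x) (q + y) l l01.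
lra.
Qed.

Lemma subgrad_exists (R : realType) d (g : 'rV[R]_d -> R) q :
  convex_fun g -> exists s, subgrad g q s.
Proof.
move=> gc.
pose h v := g (q + v) - g q.
have hc : convex_fun h := convex_shift q gc.
pose Vk (k : nat) (v : 'rV[R]_d) := forall i : 'I_d, (k <= i)%N -> v 0 i = 0.
have main : forall k, exists L, forall v, Vk k v -> dotv L v <= h v.
  elim=> [|k [L HL]].
    exists 0 => v Vv.
    have -> : v = 0 by apply/rowP => i; rewrite mxE; apply: Vv.
    by rewrite dotv0r /h addr0 subrr.
  case: (ltnP k d) => hk; last first.
    exists L => v Vv; apply: HL => i ki.
    by move: (ltn_ord i); rewrite ltnNge (leq_trans hk ki).
  pose j := Ordinal hk.
  pose e : 'rV[R]_d := delta_mx 0 j.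
  have V0 : Vk k 0 by move=> i _; rewrite mxE.
  have Vc : forall v w l, Vk k v -> Vk k w -> 0 <= l <= 1 -> Vk k (l *: v + (1 - l) *: w).
    by move=> v w l Vv Vw _ i ki; rewrite !mxE Vv // Vw // !mulr0 addr0.
  pose c0 := (dotv L 0 - h (0 - 1 *: e)) / 1.
  have Hc0 : forall v a, Vk k v -> 0 < a -> c0 * a <= h (v + a *: e) - dotv L v.
    move=> v a Vv a0.
    have := @one_step_compat _ _ h (Vk k) L e hc Vc HL v a 0 1 Vv V0 a0 ltr01.
    by rewrite -/c0 ler_pdivlMr.
  have [c [_ Hc]] := one_step hc V0 Vc HL Hc0.
  exists (L + (c - L 0 j) *: e) => w Vw.
  pose a := w 0 j.
  pose v := w - a *: e.
  have Vv : Vk k v.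
    move=> i ki; rewrite /v !mxE.
    case: (eqVneq i j) => [->|ij].
      by rewrite /a !eqxx mulr1 subrr.
    rewrite andbF mulr0 subr0; apply: Vw.
    rewrite ltn_neqAle ki andbT; apply/eqP => ik; move: ij; rewrite /j.
    by apply/negP; rewrite negbK; apply/eqP/val_inj; rewrite /= ik.
  have Ew : w = v + a *: e by rewrite /v subrK.
  have := Hc v a Vv; rewrite -Ew => H.
  rewrite dotvDl dotvZl (dotvC e w) dotv_delta -/a.
  have -> : dotv L w = dotv L v + a * L 0 j.
    by rewrite {1}Ew dotvDr dotvZr dotv_delta.
  lra.
have [L HL] := main d.
exists L => y.
have Vd : Vk d (y - q) by move=> i di; exfalso; move: (ltn_ord i); rewrite leq_gtF.
have := HL (y - q) Vd.
rewrite /h; have -> : q + (y - q) = y by rewrite addrC subrK.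
lra.
Qed.

Lemma coord_le_mxnorm (R : realType) d (v : 'rV[R]_d) i : `|v 0 i| <= `|v|.
Proof.
have /mapP[j Hj ->] : `|v 0 i| \in [seq `|v x.1 x.2| | x : 'I_1 * 'I_d].
  by apply/mapP; exists (0, i) => //=; rewrite mem_enum.
by rewrite [leRHS]/Num.Def.normr /= mx_normrE; apply/bigmax_geP; right => /=; exists j.
Qed.

Lemma coord_le_enorm (R : realType) d (v : 'rV[R]_d) i : `|v 0 i| <= enorm v.
Proof.
rewrite -(@ler_pXn2r _ 2) ?nnegrE ?enorm_ge0 // enorm_sq dotvE real_normK ?num_real //.
rewrite (bigD1 i) //= expr2 lerDl sumr_ge0 // => j _; rewrite -expr2 sqr_ge0. done.
Qed.

Lemma mxnorm_le_enorm (R : realType) d (v : 'rV[R]_d) : `|v| <= enorm v.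
Proof.
rewrite [leLHS]/Num.Def.normr /= mx_normrE; apply/bigmax_leP; split; first exact: enorm_ge0.
move=> [i j] _ /=; rewrite (ord1 i); exact: coord_le_enorm.
Qed.

Lemma dot_abs_le (R : realType) d (s w : 'rV[R]_d) :
  `|dotv s w| <= (\sum_i `|s 0 i|) * `|w|.
Proof.
rewrite dotvE mulr_suml; apply: le_trans (ler_norm_sum _ _ _) _.
apply: ler_sum => i _; rewrite normrM ler_wpM2l //; exact: coord_le_mxnorm.
Qed.

Lemma le_of_small (R : realType) (a b M : R) : 0 <= M ->
  (forall e, 0 < e -> a <= b + M * e) -> a <= b.
Proof.
move=> M0 H; rewrite leNgt; apply/negP => ab.
have e0 : 0 < (a - b) / (M + 1) by rewrite divr_gt0 ?subr_gt0 // ltr_wpDl.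
have := H _ e0.
have : M * ((a - b) / (M + 1)) < a - b.
  rewrite mulrA ltr_pdivrMr ?ltr_wpDl //; nra.
lra.
Qed.

Lemma closed_sublevel (R : realType) d (g : 'rV[R]_d -> R) c :
  convex_fun g -> closed [set z | g z <= c].
Proof.
move=> gc y Hy.
have [s Hs] := subgrad_exists y gc.
apply: (@le_of_small _ _ _ (\sum_i `|s 0 i|)); first by apply: sumr_ge0.
move=> e e0.
have [z [Kz Bz]] := Hy _ (nbhsx_ballx y e e0).
move: Bz; rewrite -ball_normE /ball_ /= => Bz.
have := Hs z; have := dot_abs_le s (z - y).
rewrite distrC in Bz.
have := ler_norm (- dotv s (z - y)); rewrite normrN.
have : (\sum_i `|s 0 i|) * `|z - y| <= (\sum_i `|s 0 i|) * e.
  by rewrite ler_wpM2l ?sumr_ge0 // ltW.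
rewrite /= in Kz.
lra.
Qed.

Lemma coordB_continuous (R : realType) d (x : 'rV[R]_d) i :
  continuous (fun z : 'rV[R]_d => x 0 i - z 0 i).
Proof.
have h1 : continuous (fun z : 'rV[R]_d => z 0 i) := @coord_continuous _ _ _ 0 i.
have h0 : continuous (fun _ : 'rV[R]_d => x 0 i) by move=> w; exact: cst_continuous.
move=> z; exact: (continuousB (h0 z) (h1 z)).
Qed.

Lemma sqd_continuous (R : realType) d (x : 'rV[R]_d) :
  continuous (fun z : 'rV[R]_d => dotv (x - z) (x - z)).
Proof.
have -> : (fun z : 'rV[R]_d => dotv (x - z) (x - z)) =
  (fun z => \sum_(i <- index_enum 'I_d) (x 0 i - z 0 i) * (x 0 i - z 0 i)).
  by apply: funext => z; rewrite dotvE; apply: eq_bigr => i _; rewrite !mxE.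
apply: (@continuous_big _ _ +%R 0 predT add_continuous) => i _ z.
have := continuousM (@coordB_continuous _ _ x i z) (@coordB_continuous _ _ x i z).
move=> H; apply: H.
Qed.

Lemma proj_exists (R : realType) d (g : 'rV[R]_d -> R) c Rad (x : 'rV[R]_d) :
  convex_fun g -> (exists z, g z <= c) -> (forall z, g z <= c -> in_ball Rad z) ->
  exists q, g q <= c /\ forall z, g z <= c -> enorm (x - q) <= enorm (x - z).
Proof.
move=> gc [z0 hz0] hb.
have A0 : [set z | g z <= c] !=set0 by exists z0.
have cA : compact [set z | g z <= c].
  apply: bounded_closed_compact; last exact: closed_sublevel.
  exists Rad; split; first exact: num_real.
  move=> M hM z /= hz; apply: le_trans (mxnorm_le_enorm _) _.
  exact: le_trans (hb _ hz) (ltW hM).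
have cf : {within [set z | g z <= c], continuous (fun z => dotv (x - z) (x - z))}.
  apply: continuous_subspaceT; exact: sqd_continuous.
have [q qA qmin] := EVT_min_rV A0 cA cf.
move: qA; rewrite inE => qA.
exists q; split => // z hz.
apply: enorm_le_sq; rewrite !enorm_sq; apply: qmin; rewrite inE; exact: hz.
Qed.

Lemma proj_var (R : realType) d (C : 'rV[R]_d -> Prop) (y p : 'rV[R]_d) :
  C p -> (forall q, C q -> enorm (y - p) <= enorm (y - q)) ->
  (forall u v l, C u -> C v -> 0 <= l <= 1 -> C (l *: u + (1 - l) *: v)) ->
  forall u, C u -> dotv (y - p) (u - p) <= 0.
Proof.
move=> Cp Hmin Cc u Cu.
apply: (small_le0 (b := enorm (u - p) ^+ 2 / 2)).
  by rewrite divr_ge0 // sqr_ge0.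
move=> l /andP[l0 l1].
have Hin : C (l *: u + (1 - l) *: p) by apply: Cc => //; rewrite (ltW l0) l1.
have H := Hmin _ Hin.
have : enorm (y - p) ^+ 2 <= enorm (y - (l *: u + (1 - l) *: p)) ^+ 2.
  by rewrite ler_pXn2r ?nnegrE ?enorm_ge0.
have -> : y - (l *: u + (1 - l) *: p) = (y - p) - l *: (u - p).
  by rewrite scalerBl scale1r scalerBr; rewrite !opprD !addrA; congr (_ + _);
     rewrite addrAC -!addrA; congr (_ + _); rewrite addrC -addrA addNr addr0.
rewrite [X in _ <= X]enormB2 enormZ dotvZr exprMn real_normK ?num_real //.
move=> H2.
have : 2 * l * dotv (y - p) (u - p) <= l ^+ 2 * enorm (u - p) ^+ 2 by lra.
move=> H3; nra.
Qed.

Lemma sublevel_conv (R : realType) d (g : 'rV[R]_d -> R) c :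
  convex_fun g ->
  forall u v l, g u <= c -> g v <= c -> 0 <= l <= 1 -> g (l *: u + (1 - l) *: v) <= c.
Proof.
move=> gc u v l hu hv hl; apply: le_trans (gc u v l hl) _.
case/andP: hl => l0 l1; nra.
Qed.

Lemma sharp (R : realType) d (g : 'rV[R]_d -> R) (eps sigma Rad : R) (x : 'rV[R]_d) :
  convex_fun g -> 0 < eps -> (exists z, g z = - eps) ->
  (forall z, g z <= 0 -> in_ball Rad z) ->
  (forall z sz, g z = - eps -> subgrad g z sz -> sigma <= enorm sz) ->
  0 < g x -> exists u, g u <= 0 /\ sigma * enorm (x - u) <= g x.
Proof.
move=> gc e0 [z0 hz0] hb hA4 gx0.
have ex0 : exists z, g z <= - eps by exists z0; rewrite hz0.
have hb' : forall z, g z <= - eps -> in_ball Rad z.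
  by move=> z hz; apply: hb; apply: le_trans hz _; rewrite oppr_le0 ltW.
have [q [hq qmin]] := proj_exists x gc ex0 hb'.
pose n := x - q.
have Kc := @sublevel_conv _ _ g (- eps) gc.
have var : forall u, g u <= - eps -> dotv n (u - q) <= 0.
  exact: (proj_var (C := fun z => g z <= - eps) hq qmin Kc).
have nn0 : n != 0.
  apply/negP => /eqP n0; have xq : x = q by apply/eqP; rewrite -subr_eq0 -/n n0.
  by move: gx0; rewrite xq; lra.
set N := dotv n n.
have N0 : 0 < N by rewrite /N -enorm_sq exprn_gt0 // enorm_gt0.
have far : forall z, g z < - eps -> exists th, 0 < th <= 1 /\
    g (th *: x + (1 - th) *: z) <= - eps.
  move=> z hz.
  set del := - eps - g z.
  have del0 : 0 < del by rewrite /del subr_gt0.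
  have den0 : 0 < g x + eps + del by lra.
  exists (del / (g x + eps + del)); split.
    rewrite divr_gt0 //= ler_pdivrMr // mul1r; lra.
  have th01 : 0 <= del / (g x + eps + del) <= 1.
    rewrite divr_ge0 ?(ltW del0) ?(ltW den0) //= ler_pdivrMr // mul1r; lra.
  apply: le_trans (gc _ _ _ th01) _.
  have E : del / (g x + eps + del) * (g x + eps + del) = del by rewrite divfK // lt0r_neq0.
  have : g z = - eps - del by rewrite /del; ring.
  move=> ->; move: E; set th := del / _ => E.
  have -> : th * g x + (1 - th) * (- eps - del) = - eps - del + th * (g x + eps + del) by ring.
  rewrite E; lra.
have dotn_th : forall th z, dotv n (th *: x + (1 - th) *: z - q) = th * N + (1 - th) * dotv n (z - q).
  move=> th z.
  have -> : th *: x + (1 - th) *: z - q = th *: n + (1 - th) *: (z - q).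
    by rewrite /n; apply/rowP => i; rewrite !mxE; ring.
  by rewrite dotvDr !dotvZr.
have gq : g q = - eps.
  apply/eqP; rewrite eq_le hq /=; rewrite leNgt; apply/negP => hlt.
  have [th [/andP[th0 th1] hth]] := far q hlt.
  have := var _ hth; rewrite dotn_th subrr dotv0r mulr0 addr0.
  move=> H; have : 0 < th * N by rewrite mulr_gt0.
  lra.
pose h v := g (q + v) - g q.
pose V v := dotv n v = 0.
have V0 : V 0 by rewrite /V dotv0r.
have Vc : forall v w l, V v -> V w -> 0 <= l <= 1 -> V (l *: v + (1 - l) *: w).
  by move=> v w l; rewrite /V dotvDr !dotvZr => -> -> _; rewrite !mulr0 addr0.
have HL : forall v, V v -> dotv 0 v <= h v.
  move=> w Vw; rewrite dotv0l /h subr_ge0 gq leNgt; apply/negP => hlt.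
  have [th [/andP[th0 th1] hth]] := far (q + w) hlt.
  have := var _ hth; rewrite dotn_th (addrC q w) addrK Vw mulr0 addr0.
  move=> H; have : 0 < th * N by rewrite mulr_gt0.
  lra.
have Hc0 : forall v a, V v -> 0 < a -> 0 * a <= h (v + a *: n) - dotv 0 v.
  move=> v a Vv a0; rewrite mul0r dotv0l subr0 /h subr_ge0 gq leNgt; apply/negP => hlt.
  have := var _ (ltW hlt).
  rewrite addrC addKr dotvDr dotvZr Vv add0r -/N.
  move=> H; have : 0 < a * N by rewrite mulr_gt0.
  lra.
have [c [c0 Hc]] := one_step (convex_shift q gc) V0 Vc HL Hc0.
pose s := (c / N) *: n.
have sub : subgrad g q s.
  move=> y.
  pose a := dotv n (y - q) / N.
  pose v := (y - q) - a *: n.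
  have Vv : V v.
    by rewrite /V /v dotvBr dotvZr -/N /a divfK ?subrr // lt0r_neq0.
  have := Hc v a Vv; rewrite dotv0l add0r /h.
  have -> : q + (v + a *: n) = y by rewrite /v subrK addrC subrK.
  have -> : dotv s (y - q) = c * a.
    by rewrite /s dotvZl /a mulrA mulrAC.
  lra.
have sig : sigma <= enorm s := hA4 q s gq sub.
have En : enorm n ^+ 2 = N by rewrite enorm_sq.
have np : 0 < enorm n by rewrite enorm_gt0.
have sig2 : sigma * enorm n <= c.
  move: sig; rewrite /s enormZ ger0_norm; last by rewrite divr_ge0 // ltW.
  have -> : c / N * enorm n = c / enorm n.
    by rewrite -En; field; rewrite lt0r_neq0.
  by rewrite ler_pdivlMr.
have cle : c <= g x + eps.
  have := Hc 0 1 V0; rewrite dotv0l add0r mulr1 add0r scale1r /h /n (addrC q) subrK gq.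
  lra.
pose mu := eps / (eps + g x).
have den : 0 < eps + g x by lra.
have mu01 : 0 <= mu <= 1.
  rewrite /mu divr_ge0 ?(ltW e0) ?(ltW den) //= ler_pdivrMr // mul1r; lra.
exists (mu *: x + (1 - mu) *: q); split.
  apply: le_trans (gc _ _ _ mu01) _; rewrite gq.
  have E : mu * (eps + g x) = eps by rewrite /mu divfK // lt0r_neq0.
  have -> : mu * g x + (1 - mu) * - eps = mu * (eps + g x) - eps by ring.
  by rewrite E subrr.
have -> : x - (mu *: x + (1 - mu) *: q) = (1 - mu) *: n.
  by rewrite /n; apply/rowP => i; rewrite !mxE; ring.
rewrite enormZ ger0_norm ?subr_ge0; last by case/andP: mu01.
have E1 : (1 - mu) * (eps + g x) = g x by rewrite /mu; field; rewrite lt0r_neq0.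
have h1 : 0 <= 1 - mu by rewrite subr_ge0; case/andP: mu01.
have : (1 - mu) * (sigma * enorm n) <= (1 - mu) * (eps + g x).
  apply: ler_wpM2l => //; lra.
rewrite E1; move=> H; apply: le_trans H; rewrite mulrCA //.
Qed.

Lemma conv_quot (R : realType) d (f : 'rV[R]_d -> R) (x u : 'rV[R]_d) (h : R) :
  convex_fun f -> h != 0 -> `|h| < 1 ->
  h^-1 * (f (h *: (u - x) + x) - f x) <= f u - f x.
Proof.
move=> fc h0 h1.
case: (ltrgtP h 0) => hs; last by rewrite hs eqxx in h0.
-
  have h1' : 0 < 1 - h by lra.
  set al := (1 - h)^-1.
  have al0 : 0 <= al <= 1.
    rewrite /al invr_ge0 (ltW h1') /= invf_le1 //; lra.
  have E : al *: (h *: (u - x) + x) + (1 - al) *: u = x.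
    apply/rowP => i; rewrite !mxE /al; field; lra.
  have := fc (h *: (u - x) + x) u al al0; rewrite E => H.
  have H2 : (1 - h) * f x <= f (h *: (u - x) + x) - h * f u.
    have := ler_wpM2l (ltW h1') H.
    have -> : (1 - h) * (al * f (h *: (u - x) + x) + (1 - al) * f u) =
              f (h *: (u - x) + x) - h * f u.
      by rewrite /al; field; lra.
    by [].
  rewrite mulrC ler_ndivrMr //.
  lra.
-
  have hl : 0 <= h <= 1 by rewrite (ltW hs) /=; rewrite ger0_norm ?ltW // in h1; apply: ltW.
  have E : h *: (u - x) + x = h *: u + (1 - h) *: x.
    by apply/rowP => i; rewrite !mxE; ring.
  have := fc u x h hl; rewrite -E => H.
  rewrite ler_pdivrMl //; lra.
Qed.

Lemma grad_ineq (R : realType) d (f : 'rV[R]_d -> R) (x u gr : 'rV[R]_d) :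
  convex_fun f -> is_gradient f x gr -> f x + dotv gr (u - x) <= f u.
Proof.
move=> fc [fd fD].
rewrite -(fD (u - x)) addrC -lerBrDr.
have dv : derivable f x (u - x) := diff_derivable fd.
rewrite /derive; apply: limr_le => //.
near=> h.
rewrite /= /shift.
have -> : h^-1 *: (f (h *: (u - x) + x) - f x) = h^-1 * (f (h *: (u - x) + x) - f x) by [].
apply: conv_quot => //.
  near: h; exact: nbhs_dnbhs_neq.
near: h; exact: dnbhs0_lt.
Unshelve. all: by end_near.
Qed.

Definition Dst (R : realType) d (g : 'rV[R]_d -> R) (z : 'rV[R]_d) : R :=
  inf [set r | exists u, g u <= 0 /\ r = enorm (z - u)].

Lemma Dst_le (R : realType) d (g : 'rV[R]_d -> R) z u : g u <= 0 -> Dst g z <= enorm (z - u).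
Proof.
move=> gu; apply: ge_inf; last by exists u.
by exists 0 => r [w [_ ->]]; exact: enorm_ge0.
Qed.

Lemma Dst_ge (R : realType) d (g : 'rV[R]_d -> R) z c : (exists u, g u <= 0) ->
  (forall u, g u <= 0 -> c <= enorm (z - u)) -> c <= Dst g z.
Proof.
move=> [u0 hu0] H; apply: lb_le_inf; first by exists (enorm (z - u0)), u0.
by move=> r [w [hw ->]]; apply: H.
Qed.

Lemma Dst_ge0 (R : realType) d (g : 'rV[R]_d -> R) z : (exists u, g u <= 0) -> 0 <= Dst g z.
Proof. by move=> ex; apply: Dst_ge => // u _; exact: enorm_ge0. Qed.

Lemma step (R : realType) d (g : 'rV[R]_d -> R) (eps sigma Gg Rad eta Gf : R)
  (xt st grt xn : 'rV[R]_d) :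
  convex_fun g -> 0 < eps -> (exists z, g z = - eps) ->
  (forall z, g z <= 0 -> in_ball Rad z) ->
  (forall z sz, in_ball Rad z -> subgrad g z sz -> enorm sz <= Gg) ->
  (forall z sz, g z = - eps -> subgrad g z sz -> sigma <= enorm sz) ->
  0 < sigma -> 0 < Gg -> in_ball Rad xt -> subgrad g xt st -> enorm grt <= Gf ->
  0 <= eta ->
  is_proj (in_ball Rad) (polyak (g xt) xt st (xt - eta *: grt)) xn ->
  Dst g xn <= Num.sqrt (1 - sigma ^+ 2 / Gg ^+ 2) * Dst g xt + eta * Gf.
Proof.
move=> gc e0 [z0 hz0] A1 A3 A4 s0 G0 bx sx hgr eta0 hproj.
have exX : exists u, g u <= 0 by exists z0; rewrite hz0 oppr_le0 ltW.
pose P := polyak (g xt) xt st.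
have Pu : forall u, g u <= 0 -> P u = u.
  move=> u gu; apply: polyak_fix; have := sx u; lra.
have S1 : Dst g xn <= Dst g (P (xt - eta *: grt)).
  apply: Dst_ge => // u gu.
  apply: le_trans (Dst_le xn gu) _.
  exact: ball_proj_nonexp hproj (A1 u gu).
have S2 : Dst g (P (xt - eta *: grt)) <= Dst g (P xt) + eta * Gf.
  have H1 : enorm (P (xt - eta *: grt) - P xt) <= eta * Gf.
    apply: le_trans (polyak_nonexp _ _ _ _ _) _.
    have -> : xt - eta *: grt - xt = - (eta *: grt) by rewrite addrAC subrr add0r.
    by rewrite enormN enormZ ger0_norm // ler_wpM2l.
  rewrite -lerBlDr; apply: Dst_ge => // u gu.
  rewrite lerBlDr; apply: le_trans (Dst_le _ gu) _.
  have -> : P (xt - eta *: grt) - u = (P (xt - eta *: grt) - P xt) + (P xt - u).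
    by rewrite addrA subrK.
  apply: le_trans (enormD _ _) _; lra.
set gam := 1 - sigma ^+ 2 / Gg ^+ 2.
have S3 : Dst g (P xt) <= Num.sqrt gam * Dst g xt.
  have D0 := Dst_ge0 xt exX.
  case: (lerP (g xt) 0) => gx.
    have -> : P xt = xt by apply: Pu.
    have := Dst_le xt gx; rewrite subrr enorm0 => H.
    have -> : Dst g xt = 0 by apply/eqP; rewrite eq_le H D0.
    by rewrite mulr0.
  have s0' : st != 0.
    apply/negP => /eqP st0; have := sx z0; rewrite st0 dotv0l addr0 hz0; lra.
  have sG : enorm st <= Gg := A3 _ _ bx sx.
  have sp := enorm_gt0 s0'.
  have [u0 [gu0 hu0]] := sharp gc e0 (ex_intro _ z0 hz0) A1 A4 gx.
  have sD : sigma * Dst g xt <= g xt.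
    apply: le_trans hu0; apply: ler_wpM2l; [exact: ltW | exact: Dst_le].
  set D := Dst g xt in sD D0 *.
  have kap : sigma ^+ 2 * D ^+ 2 / Gg ^+ 2 <= g xt ^+ 2 / enorm st ^+ 2.
    have h1 : (sigma * D) ^+ 2 <= g xt ^+ 2.
      have sDp : 0 <= sigma * D by rewrite mulr_ge0 // ltW.
      by rewrite !expr2; apply: ler_pM.
    have h2 : g xt ^+ 2 / Gg ^+ 2 <= g xt ^+ 2 / enorm st ^+ 2.
      apply: ler_wpM2l; first exact: sqr_ge0.
      rewrite lef_pV2 ?posrE ?exprn_gt0 //.
      by rewrite !expr2; apply: ler_pM => //; exact: enorm_ge0.
    apply: le_trans h2; rewrite -exprMn; apply: ler_wpM2r => //.
    by rewrite invr_ge0 sqr_ge0.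
  have key : forall u, g u <= 0 ->
      Num.sqrt (Dst g (P xt) ^+ 2 + sigma ^+ 2 * D ^+ 2 / Gg ^+ 2) <= enorm (xt - u).
    move=> u gu.
    have hd := @polyak_dec _ _ (g xt) xt st u s0' gx (le_trans (sx u) gu).
    have DP0 : 0 <= Dst g (P xt) := Dst_ge0 _ exX.
    have hDP : Dst g (P xt) <= enorm (P xt - u) := Dst_le _ gu.
    have hDP2 : Dst g (P xt) ^+ 2 <= enorm (P xt - u) ^+ 2.
      by rewrite !expr2; apply: ler_pM.
    rewrite -(ger0_norm (enorm_ge0 (xt - u))) -sqrtr_sqr.
    rewrite ler_sqrt ?sqr_ge0 //; rewrite /P in hDP2 *; lra.
  have hb2 : Num.sqrt (Dst g (P xt) ^+ 2 + sigma ^+ 2 * D ^+ 2 / Gg ^+ 2) <= D.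
    exact: Dst_ge.
  have a0 : 0 <= Dst g (P xt) ^+ 2 + sigma ^+ 2 * D ^+ 2 / Gg ^+ 2.
    by rewrite addr_ge0 ?sqr_ge0 // mulr_ge0 ?invr_ge0 ?sqr_ge0 // mulr_ge0 ?sqr_ge0.
  have hb3 : Dst g (P xt) ^+ 2 + sigma ^+ 2 * D ^+ 2 / Gg ^+ 2 <= D ^+ 2.
    rewrite -(sqr_sqrtr a0) !expr2; apply: ler_pM => //; exact: sqrtr_ge0.
  have hb4 : Dst g (P xt) ^+ 2 <= D ^+ 2 * gam.
    rewrite /gam mulrBr mulr1; move: hb3.
    have -> : sigma ^+ 2 * D ^+ 2 / Gg ^+ 2 = D ^+ 2 * (sigma ^+ 2 / Gg ^+ 2) by ring.
    lra.
  have DP0 : 0 <= Dst g (P xt) := Dst_ge0 _ exX.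
  rewrite -(ger0_norm DP0) -sqrtr_sqr (mulrC (Num.sqrt gam)).
  rewrite -(ger0_norm D0) -sqrtr_sqr -sqrtrM ?sqr_ge0 //.
  rewrite ler_sqrt //; apply: le_trans hb4; exact: sqr_ge0.
lra.
Qed.


Lemma rstep (R : realType) d (f g : 'rV[R]_d -> R) (eta Gf Rad : R)
  (xt st grt xn u : 'rV[R]_d) :
  convex_fun f -> is_gradient f xt grt -> enorm grt <= Gf -> 0 < eta ->
  subgrad g xt st -> g u <= 0 -> in_ball Rad u ->
  is_proj (in_ball Rad) (polyak (g xt) xt st (xt - eta *: grt)) xn ->
  f xt - f u <= (enorm (xt - u) ^+ 2 - enorm (xn - u) ^+ 2) / (2 * eta) + eta * Gf ^+ 2 / 2.
Proof.
move=> fc fg hgr eta0 sx gu bu hproj.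
have gi := grad_ineq u fc fg.
have dt : f xt - f u <= dotv grt (xt - u).
  move: gi; rewrite -opprB dotvNr; lra.
pose P := polyak (g xt) xt st.
have Pu : P u = u by apply: polyak_fix; have := sx u; lra.
have h1 : enorm (xn - u) <= enorm (xt - eta *: grt - u).
  apply: le_trans (ball_proj_nonexp hproj bu) _.
  rewrite -{1}Pu; exact: polyak_nonexp.
have h2 : enorm (xn - u) ^+ 2 <= enorm (xt - eta *: grt - u) ^+ 2.
  by rewrite !expr2; apply: ler_pM => //; exact: enorm_ge0.
have E : xt - eta *: grt - u = (xt - u) - eta *: grt by rewrite addrAC.
rewrite E in h2; move: h2; rewrite [X in _ <= X -> _]enormB2 dotvZr enormZ exprMn ger0_norm ?(ltW eta0) //.
move=> h2.
have hg2 : enorm grt ^+ 2 <= Gf ^+ 2.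
  by rewrite !expr2; apply: ler_pM => //; exact: enorm_ge0.
have e2 : eta ^+ 2 * enorm grt ^+ 2 <= eta ^+ 2 * Gf ^+ 2.
  by apply: ler_wpM2l => //; exact: sqr_ge0.
rewrite (dotvC (xt - u)) in h2.
have key : 2 * eta * (f xt - f u) <= enorm (xt - u) ^+ 2 - enorm (xn - u) ^+ 2 + eta ^+ 2 * Gf ^+ 2.
  have : 2 * eta * (f xt - f u) <= 2 * eta * dotv grt (xt - u).
    by apply: ler_wpM2l => //; rewrite mulr_ge0 // ltW.
  lra.
have e20 : 0 < 2 * eta by rewrite mulr_gt0.
rewrite -(ler_pM2l e20).
have -> : 2 * eta * ((enorm (xt - u) ^+ 2 - enorm (xn - u) ^+ 2) / (2 * eta) + eta * Gf ^+ 2 / 2)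
   = enorm (xt - u) ^+ 2 - enorm (xn - u) ^+ 2 + eta ^+ 2 * Gf ^+ 2.
  by field; rewrite lt0r_neq0.
exact: key.
Qed.

Lemma rg_bounds (R : realType) (sigma Gg : R) : 0 < sigma -> 0 < Gg ->
  0 <= Num.sqrt (1 - sigma ^+ 2 / Gg ^+ 2) < 1.
Proof.
move=> s0 G0; rewrite sqrtr_ge0 /=.
have a0 : 0 < sigma ^+ 2 / Gg ^+ 2 by rewrite divr_gt0 // exprn_gt0.
case: (lerP (1 - sigma ^+ 2 / Gg ^+ 2) 0) => h.
  by rewrite ler0_sqrtr.
rewrite -[X in _ < X]sqrtr1 ltr_sqrt // ?ltr01 //; lra.
Qed.

Lemma rg_exp (R : realType) (sigma Gg : R) : 0 < sigma -> 0 < Gg ->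
  Num.sqrt (1 - sigma ^+ 2 / Gg ^+ 2) <= expR (- (sigma ^+ 2 / Gg ^+ 2) / 2).
Proof.
move=> s0 G0.
case: (lerP (1 - sigma ^+ 2 / Gg ^+ 2) 0) => h.
  by rewrite ler0_sqrtr // ltW // expR_gt0.
set y := - (sigma ^+ 2 / Gg ^+ 2) / 2.
have -> : expR y = Num.sqrt (expR y ^+ 2).
  by rewrite sqrtr_sqr ger0_norm // ltW // expR_gt0.
rewrite ler_sqrt; last by rewrite sqr_ge0.
rewrite [expR y ^+ 2]expr2 -expRD.
have -> : y + y = - (sigma ^+ 2 / Gg ^+ 2).
  by rewrite /y; field; rewrite lt0r_neq0.
have := expR_ge1Dx (- (sigma ^+ 2 / Gg ^+ 2)); lra.
Qed.

Lemma pow_le (R : realType) (a b : R) k : 0 <= a -> a <= b -> a ^+ k <= b ^+ k.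
Proof.
move=> a0 ab; elim: k => [|k IH]; first by rewrite !expr0.
rewrite !exprS; apply: ler_pM => //; exact: exprn_ge0.
Qed.

Lemma rg_pow (R : realType) (sigma Gg : R) (t : nat) : 0 < sigma -> 0 < Gg -> (1 <= t)%N ->
  Num.sqrt (1 - sigma ^+ 2 / Gg ^+ 2) ^+ t.-1 <=
  expR (- (sigma ^+ 2 * (t%:R - 1)) / (2 * Gg ^+ 2)).
Proof.
move=> s0 G0 t1.
have -> : - (sigma ^+ 2 * (t%:R - 1)) / (2 * Gg ^+ 2) =
          (t.-1)%:R * (- (sigma ^+ 2 / Gg ^+ 2) / 2).
  rewrite -(prednK t1) /= -addn1 natrD /=; field.
  by rewrite lt0r_neq0 // exprn_gt0.
rewrite expRM_natl; apply: pow_le; first by case/andP: (rg_bounds s0 G0).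
exact: rg_exp.
Qed.

Local Close Scope classical_set_scope.
Unset Implicit Arguments.

Theorem corollary3 (R : realType) (d T : nat) (hd : (0 < d)%N) (hT : (0 < T)%N)
  (g : 'rV[R]_d -> R) (f : nat -> 'rV[R]_d -> R) (gradf : nat -> 'rV[R]_d -> 'rV[R]_d)
  (Rad Gf Gg sigma eps : R)
  (x : nat -> 'rV[R]_d) (s : nat -> 'rV[R]_d) :
  convex_fun g ->
  (* (A1) *)
  0 < Rad -> (forall z, g z <= 0 -> in_ball Rad z) ->
  (* (A2) *)
  0 < Gf ->
  (forall t, (1 <= t <= T)%N ->
     convex_fun (f t) /\ forall z, is_gradient (f t) z (gradf t z)) ->
  (forall t z, (1 <= t <= T)%N -> in_ball Rad z -> enorm (gradf t z) <= Gf) ->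
  (* (A3) *)
  0 < Gg ->
  (forall z sz, in_ball Rad z -> subgrad g z sz -> enorm sz <= Gg) ->
  (* (A4) *)
  0 < sigma -> 0 < eps ->
  (exists z, g z = - eps) ->
  (forall z sz, g z = - eps -> subgrad g z sz -> sigma <= enorm sz) ->
  (* the algorithm, with x_1 in R B, eta = 2R/(Gf sqrt T), rho = 0 *)
  in_ball Rad (x 1%N) ->
  (forall t, (1 <= t <= T)%N ->
     subgrad g (x t) (s t) /\
     is_proj (in_ball Rad)
       (pre_proj g (2 * Rad / (Gf * Num.sqrt T%:R)) 0 (x t) (gradf t (x t)) (s t))
       (x t.+1)) ->
  let gamma := 1 - sigma ^+ 2 / Gg ^+ 2 in
  let xi := 1 - Num.sqrt gamma in
  (* regret bound, against every comparator in X = {g <= 0} *)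
  (forall u, g u <= 0 ->
     \sum_(1 <= t < T.+1) f t (x t) - \sum_(1 <= t < T.+1) f t u
       <= 2 * Rad * Gf * Num.sqrt T%:R) /\
  (* constraint violation bound *)
  (forall t, (1 <= t <= T)%N ->
     g (x t) <= 2 * Rad * Gg * expR (- (sigma ^+ 2 * (t%:R - 1)) / (2 * Gg ^+ 2))
                + 2 * Rad * Gg / (xi * Num.sqrt T%:R)).
Proof.
move=> gc R0 A1 Gf0 A2 A2b Gg0 A3 s0 e0 exz A4 bx1 alg gamma xi.
set eta := 2 * Rad / (Gf * Num.sqrt T%:R).
have sT : 0 < Num.sqrt (T%:R : R) by rewrite sqrtr_gt0 ltr0n.
have eta0 : 0 < eta by rewrite /eta divr_gt0 ?mulr_gt0.
have algP : forall t, (1 <= t <= T)%N -> subgrad g (x t) (s t) /\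
    is_proj (in_ball Rad) (polyak (g (x t)) (x t) (s t) (x t - eta *: gradf t (x t))) (x t.+1).
  exact: alg.
have balls : forall t, (1 <= t <= T.+1)%N -> in_ball Rad (x t).
  move=> [|t] // /andP[_ tT]; case: t tT => [|t] tT //.
  by have [_ [] ] := algP t.+1 tT.
have [z0 hz0] := exz.
have exX : exists u, g u <= 0 by exists z0; rewrite hz0 oppr_le0 ltW.
have twoR : forall u v : 'rV[R]_d, in_ball Rad u -> in_ball Rad v -> enorm (u - v) <= 2 * Rad.
  move=> u v bu bv; apply: le_trans (enormD u (- v)) _; rewrite enormN.
  rewrite /in_ball in bu bv; lra.
split.
- move=> u gu.
  have bu := A1 u gu.
  have per : forall t, (1 <= t < T.+1)%N -> f t (x t) - f t u <=
      (enorm (x t - u) ^+ 2 - enorm (x t.+1 - u) ^+ 2) / (2 * eta) + eta * Gf ^+ 2 / 2.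
    move=> t ht.
    have ht' : (1 <= t <= T)%N by rewrite -ltnS.
    have [fc fgr] := A2 t ht'.
    have [sx pj] := algP t ht'.
    have bt : in_ball Rad (x t) by apply: balls; case/andP: ht' => -> /= /leqW.
    exact: rstep fc (fgr (x t)) (A2b t (x t) ht' bt) eta0 sx gu bu pj.
  rewrite -sumrB; apply: le_trans (ler_sum_nat per) _.
  rewrite big_split /= sumr_const_nat -mulr_suml.
  rewrite (@telescope_sumr_eq _ _ _ (fun t => - enorm (x t - u) ^+ 2)) //; last first.
    by move=> k _; rewrite opprK addrC.
  rewrite opprK subn1 /= -mulr_natr.
  have a1 : enorm (x 1%N - u) ^+ 2 <= (2 * Rad) ^+ 2.
    by rewrite !expr2; apply: ler_pM; rewrite ?enorm_ge0 ?twoR //; lra.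
  have aT := sqr_ge0 (enorm (x T.+1 - u)).
  have e20 : 0 < 2 * eta by rewrite mulr_gt0.
  have h1 : (- enorm (x T.+1 - u) ^+ 2 + enorm (x 1%N - u) ^+ 2) / (2 * eta) <=
            (2 * Rad) ^+ 2 / (2 * eta).
    rewrite ler_pM2r ?invr_gt0 //; lra.
  have E : (2 * Rad) ^+ 2 / (2 * eta) + eta * Gf ^+ 2 / 2 * T%:R = 2 * Rad * Gf * Num.sqrt T%:R.
    rewrite /eta; move: sT; set st := Num.sqrt (T%:R : R) => sT.
    have hst : (T%:R : R) = st ^+ 2 by rewrite /st sqr_sqrtr ?ler0n.
    rewrite hst; field.
    by rewrite !lt0r_neq0.
  lra.
- move=> t ht.
  set rg := Num.sqrt gamma.
  have /andP[rg0 rg1] := rg_bounds s0 Gg0.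
  rewrite -/gamma -/rg in rg0 rg1.
  set c := eta * Gf.
  have c0 : 0 <= c by rewrite mulr_ge0 ?ltW.
  have rg1' : 0 < 1 - rg by rewrite subr_gt0.
  have cr0 : 0 <= c / (1 - rg) by rewrite divr_ge0 // ltW.
  have Dbound : forall k, (k < T)%N -> Dst g (x k.+1) <= rg ^+ k * (2 * Rad) + c / (1 - rg).
    elim=> [|k IH] hk.
      have hz0' : g z0 <= 0 by rewrite hz0 oppr_le0 ltW.
      rewrite expr0 mul1r; apply: le_trans (Dst_le (x 1%N) hz0') _.
      have := twoR _ _ bx1 (A1 z0 hz0'); lra.
    have hk1 : (0 < k.+1 <= T)%N by rewrite /= ltnW.
    have [sx pj] := algP k.+1 hk1.
    have bt : in_ball Rad (x k.+1) by apply: balls; rewrite /= leqW // ltnW.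
    have hgr := A2b k.+1 (x k.+1) hk1 bt.
    have hst := step gc e0 exz A1 A3 A4 s0 Gg0 bt sx hgr (ltW eta0) pj.
    rewrite -/gamma -/rg -/c in hst.
    have IH' := IH (ltnW hk).
    have h1 : rg * Dst g (x k.+1) <= rg * (rg ^+ k * (2 * Rad) + c / (1 - rg)).
      exact: ler_wpM2l.
    have E : rg * (rg ^+ k * (2 * Rad) + c / (1 - rg)) + c = rg ^+ k.+1 * (2 * Rad) + c / (1 - rg).
      by rewrite exprS; field; rewrite lt0r_neq0.
    lra.
  have bt : in_ball Rad (x t) by apply: balls; case/andP: ht => -> /= /leqW.
  have [sx _] := algP t ht.
  have gD : g (x t) <= Gg * Dst g (x t).
    have : g (x t) / Gg <= Dst g (x t).
      apply: Dst_ge => // u gu.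
      rewrite ler_pdivrMr //.
      have := sx u; rewrite -opprB dotvNr => hs.
      have := CS (s t) (x t - u).
      have := A3 _ _ bt sx.
      have := enorm_ge0 (x t - u).
      nra.
    by rewrite ler_pdivrMr // mulrC.
  have t1 : (1 <= t)%N by case/andP: ht.
  have htT : (t.-1 < T)%N by rewrite prednK //; case/andP: ht.
  have hD := Dbound t.-1 htT.
  rewrite prednK // in hD.
  have hp := rg_pow s0 Gg0 t1.
  rewrite -/gamma -/rg in hp.
  have E : Gg * (c / (1 - rg)) = 2 * Rad * Gg / (xi * Num.sqrt T%:R).
    rewrite /c /eta /xi -/rg; field.
    by rewrite !lt0r_neq0.
  have h2 : Gg * (rg ^+ t.-1 * (2 * Rad)) <= 2 * Rad * Gg * expR (- (sigma ^+ 2 * (t%:R - 1)) / (2 * Gg ^+ 2)).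
    have p0 : 0 <= 2 * Rad * Gg by rewrite !mulr_ge0 // ltW.
    have := ler_wpM2r p0 hp.
    lra.
  have h3 : Gg * Dst g (x t) <= Gg * (rg ^+ t.-1 * (2 * Rad)) + Gg * (c / (1 - rg)).
    by rewrite -mulrDr; apply: ler_wpM2l => //; exact: ltW.
  lra.
Qed.
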